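(* Let $\mathcal C$ be a discard category and let $\alpha,\beta$ be two regular stateful morphism sequences over $\mathcal C$ with the same input sequence $(A_i)_{i\ge1}$ and the same output sequence $(B_i)_{i\ge1}$. If $\alpha\equiv\beta$, then $\mathrm{FA}_k(\alpha)=\mathrm{FA}_k(\beta)$ for every $k\ge1$.
   Context: Monoidal categories are treated as strict (associators and unitors suppressed); $\sigma$ denotes the symmetry. A discard category is a symmetric monoidal category $(\mathcal C,\otimes,I)$ together with, for every object $A$, a morphism $\top_A:A\to I$ (the discard) such that $\top_I=\mathrm{id}_I$ and $\top_{A\otimes B}=\top_A\otimes\top_B$. A morphism $f:A\to B$ is causal if $\top_B\circ f=\top_A$. A stateful morphism sequence $\alpha$ over $\mathcal C$ consists of objects $(A_i)_{i\ge1}$ (inputs), $(B_i)_{i\ge1}$ (outputs), $(M_i)_{i\ge0}$ (memories) with $M_0=I$, and morphisms (layers) $\alpha_i\in\mathcal C(A_i\otimes M_{i-1},B_i\otimes M_i)$ for $i\ge1$. It is regular if there is $n$ such that for all $k\ge n$: $A_k=A_n$, $B_k=B_n$, $M_k=M_n$ and $\alpha_k=\alpha_n$. Composition and tensor of stateful sequences are defined layerwise: the memory of $\beta\circ\alpha$ (resp. $\alpha\otimes\beta$) at tick $k$ is $M^\alpha_k\otimes M^\beta_k$, and its $k$-th layer applies $\alpha_k$ and then $\beta_k$ (resp. $\alpha_k$ and $\beta_k$ side by side), with symmetries rearranging wires. The delay $D\alpha$ has $(D\alpha)_1=\mathrm{id}_I$ (with first input, output and memory $I$) and $(D\alpha)_k=\alpha_{k-1}$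 for $k\ge2$. Finite approximations: put $\Phi_1=\alpha_1:A_1\to B_1\otimes M_1$ and $\Phi_{k+1}=(\mathrm{id}_{B_1\otimes\cdots\otimes B_k}\otimes\alpha_{k+1})\circ(\mathrm{id}_{B_1\otimes\cdots\otimes B_k}\otimes\sigma_{M_k,A_{k+1}})\circ(\Phi_k\otimes\mathrm{id}_{A_{k+1}})$, a morphism $A_1\otimes\cdots\otimes A_{k+1}\to B_1\otimes\cdots\otimes B_{k+1}\otimes M_{k+1}$. Then $\mathrm{FA}_k(\alpha):=(\mathrm{id}_{B_1\otimes\cdots\otimes B_k}\otimes\top_{M_k})\circ\Phi_k$. The congruence $\equiv$: judgments $\Gamma\vdash\alpha=\beta$ between parallel regular stateful sequences, $\Gamma$ a set of such equations, are derived (by well-founded, possibly infinitely branching derivations) from: (hyp) $\Gamma\vdash\alpha=\beta$ if $(\alpha=\beta)\in\Gamma$; (CM) for $k\ge1$, $\beta_k\in\mathcal C(A_k\otimes M_{k-1},B_k\otimes N)$, a causal $c\in\mathcal C(N,M_k)$ and $\gamma\in\mathcal C(A_{k+1}\otimes M_k,B_{k+1}\otimes M_{k+1})$, the sequence with layers $k,k+1$ equal to $(\mathrm{id}\otimes c)\circ\beta_k,\gamma$ equals the sequence (memory $N$ at tick $k$) with layers $\beta_k,\gamma\circ(\mathrm{id}\otimes c)$, all other layers identical; (IM) for an idempotent $\pi\in\mathcal C(M_k,M_k)$, the sequence with layers $k,k+1$ equal to $(\mathrm{id}\otimes\pi)\circ\beta_k,\gamma$ equals the sequence with layers $(\mathrm{id}\otimes\pi)\circ\beta_k,\gamma\circ(\mathrm{id}\otimes\pi)$,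 others identical; reflexivity, symmetry, transitivity; closure under $\gamma\circ-$, $-\circ\gamma$, $\gamma\otimes-$, $-\otimes\gamma$; and coinduction: if $(\alpha^{(n)})_{n\ge0},(\beta^{(n)})_{n\ge0}$ are such that for every $n$, $\Gamma\cup\{D\alpha^{(n+1)}=D\beta^{(n+1)}\}\vdash\alpha^{(n)}=\beta^{(n)}$, then $\Gamma\vdash\alpha^{(0)}=\beta^{(0)}$. We write $\alpha\equiv\beta$ iff $\emptyset\vdash\alpha=\beta$. *)

(* Defs.v *)
From Stdlib Require Import Arith.

Set Implicit Arguments.

(* Morphisms form a single type with domain/codomain maps, so that the  *)
(* strictness equations on objects (associativity, unit) are plain      *)
(* equalities and no casts are needed.  C(A,B) = {f | dom f = A /\      *)
(* cod f = B}.                                                          *)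

Record discard_cat := DiscardCat {
  Obj : Type;
  Mor : Type;
  dom : Mor -> Obj;
  cod : Mor -> Obj;
  idm : Obj -> Mor;
  comp : Mor -> Mor -> Mor;            (* comp g f = g o f *)
  ten : Obj -> Obj -> Obj;
  tenm : Mor -> Mor -> Mor;
  unit_obj : Obj;
  sym : Obj -> Obj -> Mor;
  disc : Obj -> Mor;

  dom_idm : forall A, dom (idm A) = A;
  cod_idm : forall A, cod (idm A) = A;
  dom_comp : forall f g, cod f = dom g -> dom (comp g f) = dom f;
  cod_comp : forall f g, cod f = dom g -> cod (comp g f) = cod g;
  comp_idl : forall f, comp (idm (cod f)) f = f;
  comp_idr : forall f, comp f (idm (dom f)) = f;
  comp_assoc : forall f g h, cod f = dom g -> cod g = dom h ->
      comp h (comp g f) = comp (comp h g) f;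

  dom_tenm : forall f g, dom (tenm f g) = ten (dom f) (dom g);
  cod_tenm : forall f g, cod (tenm f g) = ten (cod f) (cod g);
  ten_assoc : forall A B C, ten (ten A B) C = ten A (ten B C);
  ten_unitl : forall A, ten unit_obj A = A;
  ten_unitr : forall A, ten A unit_obj = A;
  tenm_assoc : forall f g h, tenm (tenm f g) h = tenm f (tenm g h);
  tenm_unitl : forall f, tenm (idm unit_obj) f = f;
  tenm_unitr : forall f, tenm f (idm unit_obj) = f;
  tenm_idm : forall A B, tenm (idm A) (idm B) = idm (ten A B);
  tenm_comp : forall f g f' g', cod f = dom g -> cod f' = dom g' ->
      tenm (comp g f) (comp g' f') = comp (tenm g g') (tenm f f');

  dom_sym : forall A B, dom (sym A B) = ten A B;
  cod_sym : forall A B, cod (sym A B) = ten B A;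
  sym_nat : forall f g,
      comp (sym (cod f) (cod g)) (tenm f g) = comp (tenm g f) (sym (dom f) (dom g));
  sym_inv : forall A B, comp (sym B A) (sym A B) = idm (ten A B);
  sym_hex : forall A B C,
      sym A (ten B C) = comp (tenm (idm B) (sym A C)) (tenm (sym A B) (idm C));
  sym_unit : forall A, sym A unit_obj = idm A;

  dom_disc : forall A, dom (disc A) = A;
  cod_disc : forall A, cod (disc A) = unit_obj;
  disc_unit : disc unit_obj = idm unit_obj;
  disc_ten : forall A B, disc (ten A B) = tenm (disc A) (disc B)
}.

Arguments idm {_} _.
Arguments comp {_} _ _.
Arguments ten {_} _ _.
Arguments tenm {_} _ _.
Arguments unit_obj {_}.
Arguments sym {_} _ _.
Arguments disc {_} _.
Arguments dom {_} _.
Arguments cod {_} _.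

Definition causal (C : discard_cat) (f : Mor C) : Prop :=
  comp (disc (cod f)) f = disc (dom f).

Arguments causal {C} f.

Definition idempotent (C : discard_cat) (f : Mor C) : Prop :=
  dom f = cod f /\ comp f f = f.

Arguments idempotent {C} f.

(* Stateful morphism sequences.  Indexing convention (0-based shift):    *)
(*   inp k = A_{k+1},  out k = B_{k+1},  lay k = alpha_{k+1},            *)
(*   mem k = M_k  (so mem 0 = M_0 = I).                                 *)

Record sms (C : discard_cat) := Sms {
  inp : nat -> Obj C;
  out : nat -> Obj C;
  mem : nat -> Obj C;
  lay : nat -> Mor C
}.

Arguments Sms {_} _ _ _ _.

Definition wf_sms (C : discard_cat) (a : sms C) : Prop :=
  mem a 0 = unit_obj /\
  forall k, dom (lay a k) = ten (inp a k) (mem a k) /\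
            cod (lay a k) = ten (out a k) (mem a (S k)).

Definition regular (C : discard_cat) (a : sms C) : Prop :=
  exists n, forall k, n <= k ->
    inp a k = inp a n /\ out a k = out a n /\ mem a k = mem a n /\ lay a k = lay a n.

Definition good (C : discard_cat) (a : sms C) : Prop := wf_sms a /\ regular a.

Definition parallel (C : discard_cat) (a b : sms C) : Prop :=
  inp a = inp b /\ out a = out b.

(* composition  b o a  (requires out a = inp b) *)
Definition scomp (C : discard_cat) (b a : sms C) : sms C :=
  Sms (inp a) (out b) (fun k => ten (mem a k) (mem b k))
      (fun k =>
         comp (tenm (idm (out b k)) (sym (mem b (S k)) (mem a (S k))))
        (comp (tenm (lay b k) (idm (mem a (S k))))
        (comp (tenm (idm (out a k)) (sym (mem a (S k)) (mem b k)))
              (tenm (lay a k) (idm (mem b k)))))).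

Definition stens (C : discard_cat) (a b : sms C) : sms C :=
  Sms (fun k => ten (inp a k) (inp b k)) (fun k => ten (out a k) (out b k))
      (fun k => ten (mem a k) (mem b k))
      (fun k =>
         comp (tenm (tenm (idm (out a k)) (sym (mem a (S k)) (out b k))) (idm (mem b (S k))))
        (comp (tenm (lay a k) (lay b k))
              (tenm (tenm (idm (inp a k)) (sym (inp b k) (mem a k))) (idm (mem b k))))).

Definition delay (C : discard_cat) (a : sms C) : sms C :=
  Sms (fun k => match k with 0 => unit_obj | S k' => inp a k' end)
      (fun k => match k with 0 => unit_obj | S k' => out a k' end)
      (fun k => match k with 0 => unit_obj | 1 => unit_obj | S k' => mem a k' end)
      (fun k => match k with 0 => idm unit_obj | S k' => lay a k' end).

Definition upd (T : Type) (f : nat -> T) (j : nat) (x : T) : nat -> T :=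
  fun i => if Nat.eqb i j then x else f i.

Definition eqns (C : discard_cat) := sms C -> sms C -> Prop.

Definition add_eq (C : discard_cat) (G : eqns C) (a b : sms C) : eqns C :=
  fun x y => G x y \/ (x = a /\ y = b).

(* The derivation system of the congruence.  The layer index k >= 1 of
   the paper corresponds to j = k-1 here (layers j and j+1, memory
   mem (j+1) = M_k). *)
Inductive derives (C : discard_cat) : eqns C -> sms C -> sms C -> Prop :=
| d_hyp : forall G a b, G a b -> derives G a b
| d_cm : forall G (a : sms C) j (bk : Mor C) (N M : Obj C) (c g : Mor C),
    dom bk = ten (inp a j) (mem a j) -> cod bk = ten (out a j) N ->
    dom c = N -> cod c = M -> causal c ->
    dom g = ten (inp a (S j)) M -> cod g = ten (out a (S j)) (mem a (S (S j))) ->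
    let L := Sms (inp a) (out a) (upd (mem a) (S j) M)
                 (upd (upd (lay a) j (comp (tenm (idm (out a j)) c) bk)) (S j) g) in
    let R := Sms (inp a) (out a) (upd (mem a) (S j) N)
                 (upd (upd (lay a) j bk) (S j) (comp g (tenm (idm (inp a (S j))) c))) in
    good L -> good R ->
    derives G L R
| d_im : forall G (a : sms C) j (bk : Mor C) (M : Obj C) (p g : Mor C),
    dom bk = ten (inp a j) (mem a j) -> cod bk = ten (out a j) M ->
    dom p = M -> idempotent p ->
    dom g = ten (inp a (S j)) M -> cod g = ten (out a (S j)) (mem a (S (S j))) ->
    mem a (S j) = M ->
    let L := Sms (inp a) (out a) (mem a)
                 (upd (upd (lay a) j (comp (tenm (idm (out a j)) p) bk)) (S j) g) in
    let R := Sms (inp a) (out a) (mem a)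
                 (upd (upd (lay a) j (comp (tenm (idm (out a j)) p) bk)) (S j)
                      (comp g (tenm (idm (inp a (S j))) p))) in
    good L -> good R ->
    derives G L R
| d_refl : forall G a, good a -> derives G a a
| d_sym : forall G a b, derives G a b -> derives G b a
| d_trans : forall G a b c, derives G a b -> derives G b c -> derives G a c
| d_postcomp : forall G a b g, derives G a b -> good g -> out a = inp g ->
    derives G (scomp g a) (scomp g b)
| d_precomp : forall G a b g, derives G a b -> good g -> out g = inp a ->
    derives G (scomp a g) (scomp b g)
| d_tensl : forall G a b g, derives G a b -> good g ->
    derives G (stens g a) (stens g b)
| d_tensr : forall G a b g, derives G a b -> good g ->
    derives G (stens a g) (stens b g)
| d_coind : forall G (a b : nat -> sms C),
    (forall n, good (a n) /\ good (b n) /\ parallel (a n) (b n)) ->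
    (forall n, derives (add_eq G (delay (a (S n))) (delay (b (S n)))) (a n) (b n)) ->
    derives G (a 0) (b 0).

Definition sequiv (C : discard_cat) (a b : sms C) : Prop :=
  derives (fun _ _ => False) a b.

Fixpoint Bprod (C : discard_cat) (a : sms C) (n : nat) : Obj C :=
  match n with
  | 0 => unit_obj
  | S n' => ten (Bprod a n') (out a n')
  end.

(* Phi a j = Phi_{j+1} *)
Fixpoint Phi (C : discard_cat) (a : sms C) (j : nat) : Mor C :=
  match j with
  | 0 => lay a 0
  | S j' =>
      comp (tenm (idm (Bprod a (S j'))) (lay a (S j')))
     (comp (tenm (idm (Bprod a (S j'))) (sym (mem a (S j')) (inp a (S j'))))
           (tenm (Phi a j') (idm (inp a (S j')))))
  end.

(* FA k a = FA_k(a), meaningful for k >= 1 *)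
Definition FA (C : discard_cat) (k : nat) (a : sms C) : Mor C :=
  comp (tenm (idm (Bprod a k)) (disc (mem a k))) (Phi a (Nat.pred k)).

(* Main.v *)
Require Import Defs.
From Stdlib Require Import Arith Lia.

Fixpoint Pr {C : discard_cat} (X : nat -> Obj C) (n : nat) : Obj C :=
  match n with 0 => unit_obj | S n' => ten (Pr X n') (X n') end.

Lemma Pr_S {C : discard_cat} (X : nat -> Obj C) n : Pr X (S n) = ten (Pr X n) (X n).
Proof. reflexivity. Qed.
Lemma Pr_0 {C : discard_cat} (X : nat -> Obj C) : Pr X 0 = unit_obj.
Proof. reflexivity. Qed.
Lemma Bprod_Pr {C : discard_cat} (a : sms C) n : Bprod a n = Pr (out a) n.
Proof. induction n; simpl; congruence. Qed.

Lemma sym_unit_l {C : discard_cat} (A : Obj C) : sym unit_obj A = idm A.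
Proof.
  pose proof (sym_inv C unit_obj A) as H.
  rewrite sym_unit, ten_unitl in H.
  pose proof (comp_idl C (sym unit_obj A)) as H2.
  rewrite cod_sym, ten_unitr in H2. congruence.
Qed.

Lemma tenm_idm2 {C : discard_cat} (X Y : Obj C) f :
  tenm (idm X) (tenm (idm Y) f) = tenm (idm (ten X Y)) f.
Proof. rewrite <- tenm_assoc, tenm_idm. reflexivity. Qed.

Lemma dom_lay {C : discard_cat} (a : sms C) k : wf_sms a -> dom (lay a k) = ten (inp a k) (mem a k).
Proof. intros [_ H]; apply H. Qed.
Lemma cod_lay {C : discard_cat} (a : sms C) k : wf_sms a -> cod (lay a k) = ten (out a k) (mem a (S k)).
Proof. intros [_ H]; apply H. Qed.
Lemma mem0 {C : discard_cat} (a : sms C) : wf_sms a -> mem a 0 = unit_obj.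
Proof. intros [H _]; apply H. Qed.

Ltac dcextra := fail.
Ltac objextra := idtac.
Create HintDb objnf.
Hint Rewrite ten_assoc ten_unitl ten_unitr @Pr_S @Pr_0 @Bprod_Pr : objnf.

Ltac objn :=
  repeat match goal with
         | H : wf_sms ?a |- context [mem ?a 0] => rewrite (mem0 a H)
         end;
  objextra; cbv beta; simpl; autorewrite with objnf.

Ltac dcstep dc :=
  first
  [ dcextra | rewrite dom_idm | rewrite cod_idm | rewrite dom_tenm | rewrite cod_tenm
  | rewrite dom_sym | rewrite cod_sym | rewrite dom_disc | rewrite cod_disc
  | match goal with
    | |- context [dom (lay ?a ?k)] => rewrite (@dom_lay _ a k) by assumption
    | |- context [cod (lay ?a ?k)] => rewrite (@cod_lay _ a k) by assumption
    | H : dom ?f = _ |- context [dom ?f] => rewrite H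
    | H : cod ?f = _ |- context [cod ?f] => rewrite H
    end
  | rewrite dom_comp by dc
  | rewrite cod_comp by dc ].

Ltac dc := repeat (dcstep dc); objn; reflexivity.

Create HintDb mnf.
Hint Rewrite tenm_assoc @tenm_idm2 tenm_idm tenm_unitl tenm_unitr @sym_unit @sym_unit_l disc_unit
  ten_assoc ten_unitl ten_unitr @Pr_S @Pr_0 @Bprod_Pr : mnf.

Lemma comp_idl' {C : discard_cat} (f : Mor C) X : cod f = X -> comp (idm X) f = f.
Proof. intros <-; apply comp_idl. Qed.
Lemma comp_idr' {C : discard_cat} (f : Mor C) X : dom f = X -> comp f (idm X) = f.
Proof. intros <-; apply comp_idr. Qed.

Ltac cnorm :=
  repeat first [ rewrite <- comp_assoc by dc
               | rewrite comp_idl' by dc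
               | rewrite comp_idr' by dc ].

Ltac mn :=
  repeat progress (
  repeat match goal with
         | H : wf_sms ?a |- context [mem ?a 0] => rewrite (mem0 a H)
         end;
  repeat (dcstep dc);
  autorewrite with mnf; cbv beta; cnorm).

Lemma inv_unique {C : discard_cat} (s r t : Mor C) :
  dom s = cod r -> cod s = dom r -> dom t = cod s -> cod t = dom s ->
  comp s r = idm (dom r) -> comp t s = idm (dom s) -> t = r.
Proof.
  intros H1 H2 H3 H4 E1 E2.
  transitivity (comp t (comp s r)).
  - rewrite E1, <- H2. rewrite <- H3. symmetry. apply comp_idr.
  - rewrite comp_assoc by congruence. rewrite E2, H1. apply comp_idl.
Qed.

Lemma sym_hex2 {C : discard_cat} (X Y Z : Obj C) :
  sym (ten X Y) Z = comp (tenm (sym X Z) (idm Y)) (tenm (idm X) (sym Y Z)).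
Proof.
  apply (inv_unique (sym Z (ten X Y))); try dc.
  - rewrite sym_hex. mn.
    rewrite (comp_assoc _ _ (tenm (sym X Z) (idm Y)) (tenm (sym Z X) (idm Y))) by dc.
    rewrite <- tenm_comp by dc. rewrite sym_inv. mn.
    rewrite <- tenm_comp by dc. rewrite sym_inv. mn. reflexivity.
  - rewrite sym_inv. f_equal; dc.
Qed.

Lemma comp_idid {C : discard_cat} (A : Obj C) : comp (idm A) (idm A) = idm A.
Proof. apply comp_idl'. apply cod_idm. Qed.

Lemma tenm_comp_idl {C : discard_cat} (A : Obj C) x y :
  cod y = dom x -> tenm (idm A) (comp x y) = comp (tenm (idm A) x) (tenm (idm A) y).
Proof. intros H. rewrite <- tenm_comp by (rewrite ?cod_idm, ?dom_idm; auto). rewrite comp_idid. reflexivity. Qed.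
Lemma tenm_comp_idr {C : discard_cat} (A : Obj C) x y :
  cod y = dom x -> tenm (comp x y) (idm A) = comp (tenm x (idm A)) (tenm y (idm A)).
Proof. intros H. rewrite <- tenm_comp by (rewrite ?cod_idm, ?dom_idm; auto). rewrite comp_idid. reflexivity. Qed.

Lemma xch {C : discard_cat} (f g : Mor C) X Y X' Y' :
  dom f = X -> cod f = X' -> dom g = Y -> cod g = Y' ->
  comp (tenm f (idm Y')) (tenm (idm X) g) = comp (tenm (idm X') g) (tenm f (idm Y)).
Proof.
  intros <- <- <- <-. rewrite <- !tenm_comp by (rewrite ?cod_idm, ?dom_idm; auto).
  rewrite comp_idl, comp_idr. rewrite comp_idl, comp_idr. reflexivity.
Qed.

Lemma chain {C : discard_cat} (x y w r : Mor C) :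
  cod r = dom y -> cod y = dom x -> comp x y = w -> comp x (comp y r) = comp w r.
Proof. intros H1 H2 <-. apply comp_assoc; auto. Qed.

Lemma xch_c {C : discard_cat} (f g r : Mor C) X Y X' Y' :
  dom f = X -> cod f = X' -> dom g = Y -> cod g = Y' -> cod r = ten X Y ->
  comp (tenm f (idm Y')) (comp (tenm (idm X) g) r) = comp (tenm (idm X') g) (comp (tenm f (idm Y)) r).
Proof.
  intros. rewrite (chain _ _ (comp (tenm (idm X') g) (tenm f (idm Y)))).
  - symmetry. apply comp_assoc; subst; rewrite ?dom_tenm, ?cod_tenm, ?dom_idm, ?cod_idm; auto.
  - subst; rewrite ?dom_tenm, ?cod_tenm, ?dom_idm, ?cod_idm; auto.
  - subst; rewrite ?dom_tenm, ?cod_tenm, ?dom_idm, ?cod_idm; auto.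
  - apply xch; auto.
Qed.
Lemma xch_c' {C : discard_cat} (f g r : Mor C) X Y X' Y' :
  dom f = X -> cod f = X' -> dom g = Y -> cod g = Y' -> cod r = ten X Y ->
  comp (tenm (idm X') g) (comp (tenm f (idm Y)) r) = comp (tenm f (idm Y')) (comp (tenm (idm X) g) r).
Proof. intros; symmetry; apply xch_c; auto. Qed.

Lemma dc_Phi {C : discard_cat} (a : sms C) j : wf_sms a ->
  dom (Phi a j) = Pr (inp a) (S j) /\ cod (Phi a j) = ten (Pr (out a) (S j)) (mem a (S j)).
Proof.
  intros W. induction j; simpl Phi.
  - split; dc.
  - destruct IHj as [H1 H2]. split; dc.
Qed.
Lemma dom_Phi {C : discard_cat} (a : sms C) j : wf_sms a -> dom (Phi a j) = Pr (inp a) (S j).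
Proof. intros W; apply (dc_Phi a j W). Qed.
Lemma cod_Phi {C : discard_cat} (a : sms C) j : wf_sms a -> cod (Phi a j) = ten (Pr (out a) (S j)) (mem a (S j)).
Proof. intros W; apply (dc_Phi a j W). Qed.

Ltac dcextra ::=
  match goal with
  | |- context [dom (Phi ?a ?k)] => rewrite (@dom_Phi _ a k) by assumption
  | |- context [cod (Phi ?a ?k)] => rewrite (@cod_Phi _ a k) by assumption
  end.
Ltac objextra ::=
  repeat match goal with H : inp ?g = out ?a |- context [inp ?g] => rewrite H end.

Lemma out_scomp {C : discard_cat} (g a : sms C) : out (scomp g a) = out g. Proof. reflexivity. Qed.
Lemma inp_scomp {C : discard_cat} (g a : sms C) : inp (scomp g a) = inp a. Proof. reflexivity. Qed.
Hint Rewrite @out_scomp @inp_scomp : mnf.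
Hint Rewrite @out_scomp @inp_scomp : objnf.
Ltac cnorm ::=
  repeat first [ rewrite <- comp_assoc by dc
               | rewrite comp_idl' by dc
               | rewrite comp_idr' by dc
               | rewrite tenm_comp_idl by dc
               | rewrite tenm_comp_idr by dc ].

Ltac peelL := repeat match goal with |- comp ?x ?r1 = comp ?x ?r2 => apply (f_equal (comp x)) end.
Ltac cnormL := repeat rewrite comp_assoc by dc.
Ltac peelR := repeat match goal with |- comp ?l1 ?x = comp ?l2 ?x => apply (f_equal (fun l => comp l x)) end.


Lemma xch_c2 {C : discard_cat} (f g r : Mor C) X Y' :
  dom f = X -> cod g = Y' -> cod r = ten X (dom g) ->
  comp (tenm f (idm Y')) (comp (tenm (idm X) g) r) = comp (tenm (idm (cod f)) g) (comp (tenm f (idm (dom g))) r).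
Proof. intros; apply xch_c; auto. Qed.

Lemma chain2 {C : discard_cat} (x y x' y' r : Mor C) :
  comp x y = comp x' y' -> cod r = dom y -> cod y = dom x -> cod r = dom y' -> cod y' = dom x' ->
  comp x (comp y r) = comp x' (comp y' r).
Proof. intros E H1 H2 H3 H4. rewrite !comp_assoc by auto. rewrite E. reflexivity. Qed.

Lemma chain1 {C : discard_cat} (x y w r : Mor C) :
  comp x y = w -> cod r = dom y -> cod y = dom x -> comp x (comp y r) = comp w r.
Proof. intros E H1 H2; apply chain; auto. Qed.
Ltac crw E := first [ rewrite (chain2 _ _ _ _ _ E) by dc | rewrite (chain1 _ _ _ _ E) by dc | rewrite E ].
Ltac crwr E := first [ rewrite <- (chain2 _ _ _ _ _ E) by dc | rewrite <- E ].

Lemma nat_l {C : discard_cat} (X Y : Obj C) g : cod g = Y ->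
  comp (sym X Y) (tenm (idm X) g) = comp (tenm g (idm X)) (sym X (dom g)).
Proof. intros <-. pose proof (sym_nat C (idm X) g) as H. rewrite cod_idm, dom_idm in H. exact H. Qed.
Lemma nat_r {C : discard_cat} (X Y : Obj C) f : cod f = X ->
  comp (sym X Y) (tenm f (idm Y)) = comp (tenm (idm Y) f) (sym (dom f) Y).
Proof. intros <-. pose proof (sym_nat C f (idm Y)) as H. rewrite cod_idm, dom_idm in H. exact H. Qed.

Lemma symL {C : discard_cat} (X Y Z : Obj C) :
  tenm (sym X Y) (idm Z) = comp (tenm (idm Y) (sym Z X)) (sym X (ten Y Z)).
Proof.
  rewrite sym_hex. mn.
  rewrite (comp_assoc _ _ (tenm (idm Y) (sym X Z)) (tenm (idm Y) (sym Z X))) by dc.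
  rewrite <- tenm_comp by dc. rewrite sym_inv. mn. reflexivity.
Qed.

Lemma YB {C : discard_cat} (X Y Z : Obj C) :
  comp (sym (ten Y X) Z) (tenm (sym X Y) (idm Z)) =
  comp (sym X (ten Z Y)) (tenm (idm X) (sym Y Z)).
Proof.
  rewrite nat_l by dc. rewrite dom_sym. rewrite sym_hex, sym_hex2. mn. reflexivity.
Qed.

Lemma K1 {C : discard_cat} (al : Mor C) A Ma B Ma' Mg :
  dom al = ten A Ma -> cod al = ten B Ma' ->
  comp (tenm (idm B) (sym Ma' Mg)) (comp (tenm al (idm Mg)) (comp (sym (ten Ma Mg) A) (tenm (sym Mg Ma) (idm A))))
  = comp (tenm (sym Mg B) (idm Ma')) (comp (tenm (idm Mg) al) (tenm (idm Mg) (sym Ma A))).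
Proof.
  intros Hd Hc.
  crw (YB Mg Ma A).
  rewrite symL. mn.
  crw (nat_l Mg (ten B Ma') al Hc). rewrite Hd. reflexivity.
Qed.

Lemma Phi_scomp {C : discard_cat} (g a : sms C) j :
  wf_sms a -> wf_sms g -> inp g = out a ->
  Phi (scomp g a) j =
  comp (tenm (idm (Pr (out g) (S j))) (sym (mem g (S j)) (mem a (S j))))
       (comp (tenm (Phi g j) (idm (mem a (S j)))) (Phi a j)).
Proof.
  intros Wa Wg Hio. induction j.
  - simpl. mn. reflexivity.
  - simpl Phi at 1. rewrite IHj. simpl. mn.
    rewrite !Hio.
    rewrite (xch_c2 (Phi g j) (lay a (S j))) by dc.
    rewrite (xch_c2 (Phi g j) (sym _ _)) by dc.
    mn.
    pose proof (K1 (lay a (S j)) (inp a (S j)) (mem a (S j)) (out a (S j)) (mem a (S (S j))) (mem g (S j))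
       ltac:(dc) ltac:(dc)) as K.
    apply (f_equal (tenm (idm (ten (Pr (out g) j) (out g j))))) in K.
    revert K; mn; intro K.
    peelL. cnormL. peelR. cnorm.
    exact K.
Qed.

Lemma tenm_split {C : discard_cat} (f g : Mor C) :
  tenm f g = comp (tenm f (idm (cod g))) (tenm (idm (dom f)) g).
Proof. rewrite <- tenm_comp by (rewrite ?cod_idm, ?dom_idm; auto). rewrite comp_idl, comp_idr. reflexivity. Qed.

Lemma disc_sym {C : discard_cat} (X Y : Obj C) :
  comp (tenm (disc X) (disc Y)) (sym Y X) = tenm (disc Y) (disc X).
Proof.
  pose proof (sym_nat C (disc Y) (disc X)) as H. rewrite !cod_disc, !dom_disc, sym_unit in H.
  rewrite <- H. apply comp_idl'. dc.
Qed.

Lemma D1w {C : discard_cat} (P X Y : Obj C) :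
  comp (tenm (idm P) (tenm (disc X) (disc Y))) (tenm (idm P) (sym Y X)) = tenm (idm P) (tenm (disc Y) (disc X)).
Proof. rewrite <- tenm_comp_idl by dc. rewrite disc_sym. reflexivity. Qed.

Lemma D2 {C : discard_cat} (P Pa X Y : Obj C) F :
  dom F = Pa -> cod F = ten P Y ->
  comp (tenm (idm P) (tenm (disc Y) (disc X))) (tenm F (idm X)) =
  comp (tenm (idm P) (disc Y)) (comp F (tenm (idm Pa) (disc X))).
Proof.
  intros Hd Hc. rewrite <- tenm_assoc. rewrite <- tenm_comp by dc.
  rewrite comp_idr' by dc. rewrite tenm_split. mn. reflexivity.
Qed.

Lemma FA_scomp {C : discard_cat} (g a : sms C) k :
  wf_sms a -> wf_sms g -> inp g = out a -> 1 <= k ->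
  FA k (scomp g a) = comp (FA k g) (FA k a).
Proof.
  intros Wa Wg Hio Hk. destruct k as [|j]; [lia|]. unfold FA. simpl Nat.pred.
  rewrite Phi_scomp by auto. simpl mem. rewrite disc_ten. mn.
  crw (D1w (ten (Pr (out g) j) (out g j)) (mem a (S j)) (mem g (S j))).
  crw (D2 (ten (Pr (out g) j) (out g j)) (ten (Pr (out a) j) (out a j)) (mem a (S j)) (mem g (S j)) (Phi g j)
         ltac:(dc) ltac:(dc)).
  mn. reflexivity.
Qed.

Ltac show := match goal with |- ?G => idtac G end.

Lemma xdA {C : discard_cat} (f h r : Mor C) X Y' :
  dom f = X -> cod h = Y' -> cod r = ten X (dom h) ->
  comp (tenm f (idm Y')) (comp (tenm (idm X) h) r) = comp (tenm (idm (cod f)) h) (comp (tenm f (idm (dom h))) r).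
Proof. intros; apply xch_c; auto. Qed.
Lemma xdB {C : discard_cat} (f h r : Mor C) X W Y' :
  dom f = X -> Y' = ten W (cod h) -> cod r = ten X (ten W (dom h)) ->
  comp (tenm f (idm Y')) (comp (tenm (idm (ten X W)) h) r) =
  comp (tenm (idm (ten (cod f) W)) h) (comp (tenm f (idm (ten W (dom h)))) r).
Proof.
  intros H1 -> H3. rewrite <- !tenm_idm2.
  apply (xch_c f (tenm (idm W) h)); rewrite ?dom_tenm, ?cod_tenm, ?dom_idm, ?cod_idm; auto.
Qed.
Lemma xuA {C : discard_cat} (f h r : Mor C) X' Y :
  cod f = X' -> Y = dom h -> cod r = ten (dom f) Y ->
  comp (tenm (idm X') h) (comp (tenm f (idm Y)) r) = comp (tenm f (idm (cod h))) (comp (tenm (idm (dom f)) h) r).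
Proof. intros; subst; apply xch_c'; auto. Qed.
Lemma xuB {C : discard_cat} (f h r : Mor C) X' W Y :
  cod f = X' -> Y = ten W (dom h) -> cod r = ten (dom f) Y ->
  comp (tenm (idm (ten X' W)) h) (comp (tenm f (idm Y)) r) =
  comp (tenm f (idm (ten W (cod h)))) (comp (tenm (idm (ten (dom f) W)) h) r).
Proof.
  intros H1 -> H3. rewrite <- !tenm_idm2.
  apply (xch_c' f (tenm (idm W) h)); rewrite ?dom_tenm, ?cod_tenm, ?dom_idm, ?cod_idm; auto.
Qed.

Lemma tenm_split2 {C : discard_cat} (f g : Mor C) :
  tenm f g = comp (tenm (idm (cod f)) g) (tenm f (idm (dom g))).
Proof. rewrite <- tenm_comp by (rewrite ?cod_idm, ?dom_idm; auto). rewrite comp_idl, comp_idr. reflexivity. Qed.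

Lemma xdW {C : discard_cat} (f h r : Mor C) W X Y' :
  X = ten (dom f) W -> Y' = ten W (cod h) -> cod r = ten X (dom h) ->
  comp (tenm f (idm Y')) (comp (tenm (idm X) h) r) =
  comp (tenm (idm (ten (cod f) W)) h) (comp (tenm f (idm (ten W (dom h)))) r).
Proof.
  intros -> -> H3. rewrite <- !tenm_idm2.
  apply (xch_c f (tenm (idm W) h)); rewrite ?dom_tenm, ?cod_tenm, ?dom_idm, ?cod_idm; auto.
  rewrite H3, ten_assoc; auto.
Qed.
Lemma xuW {C : discard_cat} (f h r : Mor C) W X Y :
  X = ten (cod f) W -> Y = ten W (dom h) -> cod r = ten (dom f) Y ->
  comp (tenm (idm X) h) (comp (tenm f (idm Y)) r) =
  comp (tenm f (idm (ten W (cod h)))) (comp (tenm (idm (ten (dom f) W)) h) r).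
Proof.
  intros -> -> H3. rewrite <- !tenm_idm2.
  apply (xch_c' f (tenm (idm W) h)); rewrite ?dom_tenm, ?cod_tenm, ?dom_idm, ?cod_idm; auto.
Qed.
Lemma xdWe {C : discard_cat} (f h : Mor C) W X Y' :
  X = ten (dom f) W -> Y' = ten W (cod h) ->
  comp (tenm f (idm Y')) (tenm (idm X) h) =
  comp (tenm (idm (ten (cod f) W)) h) (tenm f (idm (ten W (dom h)))).
Proof.
  intros -> ->. rewrite <- !tenm_idm2.
  apply (xch f (tenm (idm W) h)); rewrite ?dom_tenm, ?cod_tenm, ?dom_idm, ?cod_idm; auto.
Qed.
Lemma xuWe {C : discard_cat} (f h : Mor C) W X Y :
  X = ten (cod f) W -> Y = ten W (dom h) ->
  comp (tenm (idm X) h) (tenm f (idm Y)) =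
  comp (tenm f (idm (ten W (cod h)))) (tenm (idm (ten (dom f) W)) h).
Proof.
  intros -> ->. rewrite <- !tenm_idm2. symmetry.
  apply (xch f (tenm (idm W) h)); rewrite ?dom_tenm, ?cod_tenm, ?dom_idm, ?cod_idm; auto.
Qed.
Ltac sldW f W := first [rewrite (xdW f _ _ W) by dc | rewrite (xdWe f _ W) by dc]; mn.
Ltac sluW f W := first [rewrite (xuW f _ _ W) by dc | rewrite (xuWe f _ W) by dc]; mn.

Ltac wk E X W :=
  let H := fresh "E" in
  pose proof E as H;
  apply (f_equal (fun x => tenm (idm X) (tenm x (idm W)))) in H;
  revert H; mn; intro H; crw H; mn; clear H.
Ltac wkr E X W :=
  let H := fresh "E" in
  pose proof E as H;
  apply (f_equal (fun x => tenm (idm X) (tenm x (idm W)))) in H;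
  revert H; mn; intro H; crw (eq_sym H); mn; clear H.
Ltac sldV V f W := rewrite <- (tenm_assoc _ (idm V) f); sldW (tenm (idm V) f) W.

Ltac slu f := first [rewrite (xuA f) by dc | rewrite (xuB f) by dc]; mn.
Ltac sld f := first [rewrite (xdA f) by dc | rewrite (xdB f) by dc]; mn.

Lemma N2 {C : discard_cat} (W Y V : Obj C) f :
  comp (tenm (idm (ten W Y)) (tenm f (idm V))) (tenm (idm W) (tenm (sym (dom f) Y) (idm V))) =
  comp (tenm (idm W) (tenm (sym (cod f) Y) (idm V))) (tenm (idm W) (tenm f (idm (ten Y V)))).
Proof.
  pose proof (nat_r (cod f) Y f eq_refl) as E.
  apply (f_equal (fun x => tenm (idm W) (tenm x (idm V)))) in E. revert E; mn; intro E.
  rewrite E. reflexivity.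
Qed.

Lemma TZ {C : discard_cat} (PA' Pg A A' B B' Ma Mg Ma' Mg' : Obj C) (Fg al ga : Mor C) :
  dom Fg = PA' -> cod Fg = ten Pg Mg ->
  dom al = ten A Ma -> cod al = ten B Ma' -> dom ga = ten A' Mg -> cod ga = ten B' Mg' ->
  comp (tenm (idm (ten Pg B)) (tenm (sym Ma' B') (idm Mg'))) (comp (tenm (idm Pg) (tenm al ga)) (comp (tenm (idm (ten Pg A)) (tenm (sym A' Ma) (idm Mg))) (comp (tenm (idm Pg) (sym (ten Ma Mg) (ten A A'))) (comp (tenm (sym Ma Pg) (idm (ten Mg (ten A A')))) (tenm (idm Ma) (tenm Fg (idm (ten A A'))))))))
  = comp (tenm (sym B Pg) (idm (ten B' (ten Ma' Mg')))) (comp (tenm (idm B) (tenm (sym Ma' (ten Pg B')) (idm Mg'))) (comp (tenm al (idm (ten Pg (ten B' Mg')))) (comp (tenm (sym Ma A) (idm (ten Pg (ten B' Mg')))) (comp (tenm (idm (ten Ma (ten A Pg))) ga) (comp (tenm (idm (ten Ma (ten A Pg))) (sym Mg A')) (comp (tenm (idm (ten Ma A)) (tenm Fg (idm A'))) (tenm (idm Ma) (tenm (sym PA' A) (idm A'))))))))).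
Proof.
  intros.
  pose proof (N2 Ma A A' Fg) as E. revert E; mn; intro E. crw E. mn. clear E.
  cnormL. peelR. cnorm.
  rewrite (sym_hex _ Ma' Pg B'). mn.
  sldW (sym B Pg) (@unit_obj C). peelL.
  pose proof (sym_hex2 B Ma' Pg) as E.
  apply (f_equal (fun x => tenm x (idm (ten B' Mg')))) in E. revert E; mn; intro E. crw (eq_sym E). mn. clear E.
  pose proof (nat_r (ten B Ma') Pg al H2) as E.
  apply (f_equal (fun x => tenm x (idm (ten B' Mg')))) in E. revert E; mn; intro E. crw E. mn. clear E.
  rewrite (tenm_split al ga). mn. peelL.
  sldW (sym Ma A) Pg.
  sldW (sym (ten A Ma) Pg) (@unit_obj C). peelL.
  rewrite (sym_hex2 Ma Mg (ten A A')), (sym_hex _ Ma A A'), (sym_hex _ Mg A A'). mn.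
  wk (sym_inv _ Ma A') (ten Pg A) Mg.
  wk (YB Ma A Pg) (@unit_obj C) (ten A' Mg).
  sldV Ma (sym A Pg) (@unit_obj C).
  rewrite (sym_hex2 Pg Mg A). mn.
  wk (sym_inv _ Pg A) Ma (ten Mg A').
  rewrite (sym_hex _ Ma Pg A). mn.
  sldW (sym Ma Pg) A. sldW (sym Ma Pg) (@unit_obj C). reflexivity.
Qed.

Lemma TS {C : discard_cat} (PA PA' PAA Pa Pg PXY A A' B B' Ma Mg Ma' Mg' : Obj C)
  (Fa Fg u s al ga : Mor C) :
  dom Fa = PA -> cod Fa = ten Pa Ma -> dom Fg = PA' -> cod Fg = ten Pg Mg ->
  dom u = ten Pa Pg -> cod u = PXY -> dom s = PAA -> cod s = ten PA PA' ->
  dom al = ten A Ma -> cod al = ten B Ma' -> dom ga = ten A' Mg -> cod ga = ten B' Mg' ->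
  comp (tenm (idm PXY)
          (comp (tenm (tenm (idm B) (sym Ma' B')) (idm Mg'))
             (comp (tenm al ga) (tenm (tenm (idm A) (sym A' Ma)) (idm Mg)))))
   (comp (tenm (idm PXY) (sym (ten Ma Mg) (ten A A')))
      (tenm (comp (tenm u (idm (ten Ma Mg)))
              (comp (tenm (idm Pa) (tenm (sym Ma Pg) (idm Mg))) (comp (tenm Fa Fg) s)))
            (idm (ten A A'))))
  =
  comp (tenm (comp (tenm u (idm (ten B B'))) (tenm (idm Pa) (tenm (sym B Pg) (idm B'))))
             (idm (ten Ma' Mg')))
   (comp (tenm (idm (ten Pa B)) (tenm (sym Ma' (ten Pg B')) (idm Mg')))
      (comp (tenm (comp (tenm (idm Pa) al) (comp (tenm (idm Pa) (sym Ma A)) (tenm Fa (idm A))))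
                  (comp (tenm (idm Pg) ga) (comp (tenm (idm Pg) (sym Mg A')) (tenm Fg (idm A')))))
         (comp (tenm (idm PA) (tenm (sym PA' A) (idm A'))) (tenm s (idm (ten A A')))))).
Proof.
  intros.
  rewrite (tenm_split (comp (tenm (idm Pa) al) _)). mn.
  do 4 slu u. peelL.
  do 4 sld Fa.
  rewrite (tenm_split2 Fa). mn.
  cnormL. peelR. cnorm.
  pose proof (TZ PA' Pg A A' B B' Ma Mg Ma' Mg' Fg al ga) as E.
  apply (f_equal (tenm (idm Pa))) in E; [|auto..]. revert E; mn; intro E. exact E.
Qed.

Fixpoint Ush {C : discard_cat} (X Y : nat -> Obj C) (n : nat) : Mor C :=
  match n with
  | 0 => idm unit_obj
  | S n' => comp (tenm (Ush X Y n') (idm (ten (X n') (Y n'))))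
                 (tenm (idm (Pr X n')) (tenm (sym (X n') (Pr Y n')) (idm (Y n'))))
  end.
Fixpoint Ssh {C : discard_cat} (X Y : nat -> Obj C) (n : nat) : Mor C :=
  match n with
  | 0 => idm unit_obj
  | S n' => comp (tenm (idm (Pr X n')) (tenm (sym (Pr Y n') (X n')) (idm (Y n'))))
                 (tenm (Ssh X Y n') (idm (ten (X n') (Y n'))))
  end.

Lemma dc_Ush {C : discard_cat} (X Y : nat -> Obj C) n :
  dom (Ush X Y n) = ten (Pr X n) (Pr Y n) /\ cod (Ush X Y n) = Pr (fun k => ten (X k) (Y k)) n.
Proof. induction n; simpl Ush; [split; dc|]. destruct IHn as [H1 H2]. split; dc. Qed.
Lemma dc_Ssh {C : discard_cat} (X Y : nat -> Obj C) n :
  dom (Ssh X Y n) = Pr (fun k => ten (X k) (Y k)) n /\ cod (Ssh X Y n) = ten (Pr X n) (Pr Y n).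
Proof. induction n; simpl Ssh; [split; dc|]. destruct IHn as [H1 H2]. split; dc. Qed.

Ltac dcextra ::=
  match goal with
  | |- context [dom (Phi ?a ?k)] => rewrite (@dom_Phi _ a k) by assumption
  | |- context [cod (Phi ?a ?k)] => rewrite (@cod_Phi _ a k) by assumption
  | |- context [dom (Ush ?X ?Y ?n)] => rewrite (proj1 (dc_Ush X Y n))
  | |- context [cod (Ush ?X ?Y ?n)] => rewrite (proj2 (dc_Ush X Y n))
  | |- context [dom (Ssh ?X ?Y ?n)] => rewrite (proj1 (dc_Ssh X Y n))
  | |- context [cod (Ssh ?X ?Y ?n)] => rewrite (proj2 (dc_Ssh X Y n))
  end.

Lemma out_stens {C : discard_cat} (a g : sms C) : out (stens a g) = fun k => ten (out a k) (out g k).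
Proof. reflexivity. Qed.
Lemma inp_stens {C : discard_cat} (a g : sms C) : inp (stens a g) = fun k => ten (inp a k) (inp g k).
Proof. reflexivity. Qed.
Hint Rewrite @out_stens @inp_stens : mnf.
Hint Rewrite @out_stens @inp_stens : objnf.

Lemma Phi_S {C : discard_cat} (a : sms C) j : Phi a (S j) =
  comp (tenm (idm (Bprod a (S j))) (lay a (S j)))
     (comp (tenm (idm (Bprod a (S j))) (sym (mem a (S j)) (inp a (S j))))
           (tenm (Phi a j) (idm (inp a (S j))))).
Proof. reflexivity. Qed.
Lemma Ush_S {C : discard_cat} (X Y : nat -> Obj C) n : Ush X Y (S n) =
  comp (tenm (Ush X Y n) (idm (ten (X n) (Y n))))
                 (tenm (idm (Pr X n)) (tenm (sym (X n) (Pr Y n)) (idm (Y n)))).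
Proof. reflexivity. Qed.
Lemma Ssh_S {C : discard_cat} (X Y : nat -> Obj C) n : Ssh X Y (S n) =
  comp (tenm (idm (Pr X n)) (tenm (sym (Pr Y n) (X n)) (idm (Y n))))
                 (tenm (Ssh X Y n) (idm (ten (X n) (Y n)))).
Proof. reflexivity. Qed.

Lemma Phi_stens {C : discard_cat} (a g : sms C) j :
  wf_sms a -> wf_sms g ->
  Phi (stens a g) j =
  comp (tenm (Ush (out a) (out g) (S j)) (idm (ten (mem a (S j)) (mem g (S j)))))
   (comp (tenm (idm (Pr (out a) (S j))) (tenm (sym (mem a (S j)) (Pr (out g) (S j))) (idm (mem g (S j)))))
     (comp (tenm (Phi a j) (Phi g j)) (Ssh (inp a) (inp g) (S j)))).
Proof.
  intros Wa Wg. induction j.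
  - simpl. mn. reflexivity.
  - rewrite Phi_S. rewrite IHj.
    rewrite (Ush_S _ _ (S j)), (Ssh_S _ _ (S j)), (Phi_S a j), (Phi_S g j).
    pose proof (TS (Pr (inp a) (S j)) (Pr (inp g) (S j)) (Pr (fun k => ten (inp a k) (inp g k)) (S j))
       (Pr (out a) (S j)) (Pr (out g) (S j)) (Pr (fun k => ten (out a k) (out g k)) (S j))
       (inp a (S j)) (inp g (S j)) (out a (S j)) (out g (S j)) (mem a (S j)) (mem g (S j))
       (mem a (S (S j))) (mem g (S (S j)))
       (Phi a j) (Phi g j) (Ush (out a) (out g) (S j)) (Ssh (inp a) (inp g) (S j)) (lay a (S j)) (lay g (S j))
       ltac:(dc) ltac:(dc) ltac:(dc) ltac:(dc) ltac:(dc) ltac:(dc) ltac:(dc) ltac:(dc)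
       ltac:(dc) ltac:(dc) ltac:(dc) ltac:(dc)) as K.
    simpl lay. simpl mem. simpl inp. revert K. mn. intro K. exact K.
Qed.

Lemma DS {C : discard_cat} (P M N : Obj C) :
  comp (tenm (tenm (idm P) (disc M)) (disc N)) (tenm (sym M P) (idm N)) = tenm (tenm (disc M) (idm P)) (disc N).
Proof.
  rewrite <- tenm_comp by dc. rewrite comp_idr' by dc.
  pose proof (nat_r unit_obj P (disc M) (cod_disc _ M)) as E.
  rewrite sym_unit_l, dom_disc in E. rewrite comp_idl' in E by dc. rewrite <- E. reflexivity.
Qed.

Lemma FA_stens {C : discard_cat} (a g : sms C) k :
  wf_sms a -> wf_sms g -> 1 <= k ->
  FA k (stens a g) = comp (Ush (out a) (out g) k) (comp (tenm (FA k a) (FA k g)) (Ssh (inp a) (inp g) k)).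
Proof.
  intros Wa Wg Hk. destruct k as [|j]; [lia|]. unfold FA. simpl Nat.pred.
  rewrite Phi_stens by auto. simpl mem. rewrite disc_ten.
  rewrite tenm_comp by dc.
  mn.
  sluW (Ush (out a) (out g) (S j)) (@unit_obj C).
  pose proof (DS (ten (Pr (out g) j) (out g j)) (mem a (S j)) (mem g (S j))) as E.
  apply (f_equal (tenm (idm (ten (Pr (out a) j) (out a j))))) in E. revert E; mn; intro E.
  crw E. mn. reflexivity.
Qed.

Lemma Bprod_delay {C : discard_cat} (a : sms C) n : Bprod (delay a) (S n) = Bprod a n.
Proof.
  induction n.
  - simpl. apply ten_unitl.
  - change (Bprod (delay a) (S (S n))) with (ten (Bprod (delay a) (S n)) (out a n)).
    rewrite IHn. reflexivity.
Qed.

Lemma Phi_delay {C : discard_cat} (a : sms C) j : wf_sms a -> Phi (delay a) (S j) = Phi a j.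
Proof.
  intros Wa. induction j.
  - rewrite Phi_S. rewrite Bprod_delay. simpl. mn. reflexivity.
  - rewrite Phi_S. rewrite IHj, Bprod_delay. rewrite (Phi_S a j). reflexivity.
Qed.

Lemma FA_delay {C : discard_cat} (a : sms C) k : wf_sms a -> 1 <= k -> FA (S k) (delay a) = FA k a.
Proof.
  intros Wa Hk. destruct k as [|k]; [lia|]. unfold FA. simpl Nat.pred.
  rewrite Phi_delay by auto. rewrite Bprod_delay. reflexivity.
Qed.

Lemma FA1_delay {C : discard_cat} (a b : sms C) : FA 1 (delay a) = FA 1 (delay b).
Proof. reflexivity. Qed.

Lemma upd_eq {T : Type} (f : nat -> T) j x : upd f j x j = x.
Proof. unfold upd. rewrite Nat.eqb_refl. reflexivity. Qed.
Lemma upd_neq {T : Type} (f : nat -> T) j x i : i <> j -> upd f j x i = f i.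
Proof. intros H. unfold upd. apply Nat.eqb_neq in H. rewrite H. reflexivity. Qed.

Lemma Bprod_out {C : discard_cat} (x y : sms C) n : out x = out y -> Bprod x n = Bprod y n.
Proof. intros H. rewrite !Bprod_Pr, H. reflexivity. Qed.

Lemma Phi_step_ext {C : discard_cat} (x y : sms C) i :
  Phi x i = Phi y i -> lay x (S i) = lay y (S i) -> mem x (S i) = mem y (S i) ->
  inp x = inp y -> out x = out y -> Phi x (S i) = Phi y (S i).
Proof.
  intros H1 H2 H3 H4 H5. rewrite !Phi_S, H1, H2, H3, H4, (Bprod_out x y (S i) H5). reflexivity.
Qed.

Lemma Phi_ext {C : discard_cat} (x y : sms C) i :
  inp x = inp y -> out x = out y -> (forall t, t <= i -> lay x t = lay y t) ->
  (forall t, t <= i -> mem x t = mem y t) -> Phi x i = Phi y i.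
Proof.
  intros Hi Ho Hl Hm. induction i.
  - simpl. apply Hl; lia.
  - apply Phi_step_ext; auto.
Qed.

Definition cmL {C : discard_cat} (a : sms C) j (M : Obj C) (bk c g : Mor C) : sms C :=
  Sms (inp a) (out a) (upd (mem a) (S j) M)
      (upd (upd (lay a) j (comp (tenm (idm (out a j)) c) bk)) (S j) g).
Definition cmR {C : discard_cat} (a : sms C) j (N : Obj C) (bk c g : Mor C) : sms C :=
  Sms (inp a) (out a) (upd (mem a) (S j) N)
      (upd (upd (lay a) j bk) (S j) (comp g (tenm (idm (inp a (S j))) c))).

Lemma inp_cmL {C : discard_cat} (a : sms C) j M bk c g : inp (cmL a j M bk c g) = inp a. Proof. reflexivity. Qed.
Lemma out_cmL {C : discard_cat} (a : sms C) j M bk c g : out (cmL a j M bk c g) = out a. Proof. reflexivity. Qed.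
Lemma mem_cmL {C : discard_cat} (a : sms C) j M bk c g : mem (cmL a j M bk c g) = upd (mem a) (S j) M. Proof. reflexivity. Qed.
Lemma inp_cmR {C : discard_cat} (a : sms C) j M bk c g : inp (cmR a j M bk c g) = inp a. Proof. reflexivity. Qed.
Lemma out_cmR {C : discard_cat} (a : sms C) j M bk c g : out (cmR a j M bk c g) = out a. Proof. reflexivity. Qed.
Lemma mem_cmR {C : discard_cat} (a : sms C) j M bk c g : mem (cmR a j M bk c g) = upd (mem a) (S j) M. Proof. reflexivity. Qed.
Hint Rewrite @inp_cmL @out_cmL @mem_cmL @inp_cmR @out_cmR @mem_cmR @upd_eq : objnf.
Hint Rewrite @upd_neq using lia : objnf.
Hint Rewrite @inp_cmL @out_cmL @mem_cmL @inp_cmR @out_cmR @mem_cmR @upd_eq : mnf.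
Hint Rewrite @upd_neq using lia : mnf.

Ltac updsimpl := cbn [lay mem inp out cmL cmR];
  repeat (rewrite upd_eq || rewrite upd_neq by lia).

Lemma FA_cm {C : discard_cat} (a : sms C) j (bk : Mor C) (N M : Obj C) (c g : Mor C) :
  dom bk = ten (inp a j) (mem a j) -> cod bk = ten (out a j) N ->
  dom c = N -> cod c = M -> causal c ->
  dom g = ten (inp a (S j)) M -> cod g = ten (out a (S j)) (mem a (S (S j))) ->
  wf_sms (cmL a j M bk c g) -> wf_sms (cmR a j N bk c g) ->
  forall k, 1 <= k -> FA k (cmL a j M bk c g) = FA k (cmR a j N bk c g).
Proof.
  intros Hbd Hbc Hcd Hcc Hca Hgd Hgc WL WR.
  set (L := cmL a j M bk c g) in *. set (R := cmR a j N bk c g) in *.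
  assert (BL : forall n, Bprod L n = Bprod a n) by (intros; apply Bprod_out; reflexivity).
  assert (BR : forall n, Bprod R n = Bprod a n) by (intros; apply Bprod_out; reflexivity).
  assert (Hlt : forall i, i < j -> Phi L i = Phi R i).
  { intros i Hi. apply Phi_ext; auto.
    - intros t Ht. subst L R. updsimpl. reflexivity.
    - intros t Ht. subst L R. updsimpl. reflexivity. }
  assert (Hj : Phi L j = comp (tenm (idm (Bprod a (S j))) c) (Phi R j)).
  { destruct j as [|j'].
    - subst L R. simpl. mn. reflexivity.
    - rewrite !Phi_S, BL, BR. rewrite (Hlt j') by lia.
      subst L R. updsimpl. mn. reflexivity. }
  assert (HSj : Phi L (S j) = Phi R (S j)).
  { rewrite !Phi_S, BL, BR, Hj. subst L R. updsimpl. mn.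
    wk (nat_r M (inp a (S j)) c Hcc) (Bprod a (S j)) (@unit_obj C). reflexivity. }
  assert (Hge : forall i, S j <= i -> Phi L i = Phi R i).
  { intros i Hi. induction Hi; auto. apply Phi_step_ext; auto.
    - subst L R. updsimpl. reflexivity.
    - subst L R. updsimpl. reflexivity. }
  intros k Hk. destruct k as [|i]; [lia|]. unfold FA. simpl Nat.pred. rewrite BL, BR.
  destruct (Nat.lt_trichotomy i j) as [Hi|[Hi|Hi]].
  - rewrite Hlt by auto. subst L R. updsimpl. reflexivity.
  - subst i. rewrite Hj. subst L R. updsimpl. mn.
    pose proof Hca as E. unfold causal in E. rewrite Hcc, Hcd in E.
    wk E (Bprod a (S j)) (@unit_obj C). reflexivity.
  - rewrite Hge by lia. subst L R. updsimpl. reflexivity.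
Qed.

Definition imL {C : discard_cat} (a : sms C) j (bk p g : Mor C) : sms C :=
  Sms (inp a) (out a) (mem a)
      (upd (upd (lay a) j (comp (tenm (idm (out a j)) p) bk)) (S j) g).
Definition imR {C : discard_cat} (a : sms C) j (bk p g : Mor C) : sms C :=
  Sms (inp a) (out a) (mem a)
      (upd (upd (lay a) j (comp (tenm (idm (out a j)) p) bk)) (S j) (comp g (tenm (idm (inp a (S j))) p))).
Lemma inp_imL {C : discard_cat} (a : sms C) j bk p g : inp (imL a j bk p g) = inp a. Proof. reflexivity. Qed.
Lemma out_imL {C : discard_cat} (a : sms C) j bk p g : out (imL a j bk p g) = out a. Proof. reflexivity. Qed.
Lemma mem_imL {C : discard_cat} (a : sms C) j bk p g : mem (imL a j bk p g) = mem a. Proof. reflexivity. Qed.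
Lemma inp_imR {C : discard_cat} (a : sms C) j bk p g : inp (imR a j bk p g) = inp a. Proof. reflexivity. Qed.
Lemma out_imR {C : discard_cat} (a : sms C) j bk p g : out (imR a j bk p g) = out a. Proof. reflexivity. Qed.
Lemma mem_imR {C : discard_cat} (a : sms C) j bk p g : mem (imR a j bk p g) = mem a. Proof. reflexivity. Qed.
Hint Rewrite @inp_imL @out_imL @mem_imL @inp_imR @out_imR @mem_imR : objnf.
Hint Rewrite @inp_imL @out_imL @mem_imL @inp_imR @out_imR @mem_imR : mnf.

Ltac updsimpl ::= cbn [lay mem inp out cmL cmR imL imR];
  repeat (rewrite upd_eq || rewrite upd_neq by lia).

Lemma FA_im {C : discard_cat} (a : sms C) j (bk : Mor C) (M : Obj C) (p g : Mor C) :
  dom bk = ten (inp a j) (mem a j) -> cod bk = ten (out a j) M ->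
  dom p = M -> idempotent p ->
  dom g = ten (inp a (S j)) M -> cod g = ten (out a (S j)) (mem a (S (S j))) ->
  mem a (S j) = M ->
  wf_sms (imL a j bk p g) -> wf_sms (imR a j bk p g) ->
  forall k, 1 <= k -> FA k (imL a j bk p g) = FA k (imR a j bk p g).
Proof.
  intros Hbd Hbc Hpd [Hpc Hpp] Hgd Hgc HM WL WR.
  assert (Hpc' : cod p = M) by congruence. clear Hpc. rewrite <- HM in Hbc, Hpd, Hgd, Hpc'. clear HM.
  set (L := imL a j bk p g) in *. set (R := imR a j bk p g) in *.
  assert (BL : forall n, Bprod L n = Bprod a n) by (intros; apply Bprod_out; reflexivity).
  assert (BR : forall n, Bprod R n = Bprod a n) by (intros; apply Bprod_out; reflexivity).
  assert (Hle : forall i, i <= j -> Phi L i = Phi R i).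
  { intros i Hi. apply Phi_ext; auto.
    - intros t Ht. subst L R. cbn [lay imL imR]. unfold upd at 1 3.
      replace (Nat.eqb t (S j)) with false by (symmetry; apply Nat.eqb_neq; lia). reflexivity. }
  assert (Hp : Phi L j = comp (tenm (idm (Bprod a (S j))) p) (Phi L j)).
  { destruct j as [|j'].
    - subst L R. simpl. mn. wk Hpp (out a 0) (@unit_obj C). reflexivity.
    - rewrite !Phi_S, BL. subst L R. updsimpl. mn.
      wk Hpp (ten (Bprod a (S j')) (out a (S j'))) (@unit_obj C). reflexivity. }
  assert (HSj : Phi L (S j) = Phi R (S j)).
  { rewrite !Phi_S, BL, BR, <- (Hle j) by lia. rewrite Hp. subst L R. updsimpl. mn.
    wk (nat_r (mem a (S j)) (inp a (S j)) p Hpc') (Bprod a (S j)) (@unit_obj C).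
    wk Hpp (ten (Bprod a (S j)) (inp a (S j))) (@unit_obj C). reflexivity. }
  assert (Hge : forall i, S j <= i -> Phi L i = Phi R i).
  { intros i Hi. induction Hi; auto. apply Phi_step_ext; auto.
    subst L R. updsimpl. reflexivity. }
  intros k Hk. destruct k as [|i]; [lia|]. unfold FA. simpl Nat.pred. rewrite BL, BR.
  destruct (le_lt_dec i j) as [Hi|Hi].
  - rewrite Hle by auto. reflexivity.
  - rewrite Hge by lia. reflexivity.
Qed.

Lemma wf_scomp {C : discard_cat} (g a : sms C) :
  wf_sms a -> wf_sms g -> inp g = out a -> wf_sms (scomp g a).
Proof.
  intros Wa Wg Hio. split.
  - simpl. rewrite (mem0 a Wa), (mem0 g Wg). apply ten_unitl.
  - intros k. simpl. split; dc.
Qed.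

Lemma wf_stens {C : discard_cat} (a g : sms C) :
  wf_sms a -> wf_sms g -> wf_sms (stens a g).
Proof.
  intros Wa Wg. split.
  - simpl. rewrite (mem0 a Wa), (mem0 g Wg). apply ten_unitl.
  - intros k. simpl. split; dc.
Qed.

Lemma wf_delay {C : discard_cat} (a : sms C) : wf_sms a -> wf_sms (delay a).
Proof.
  intros Wa. split.
  - reflexivity.
  - intros [|k]; simpl.
    + split; dc.
    + destruct k as [|k]; split; dc.
Qed.

Lemma reg_scomp {C : discard_cat} (g a : sms C) : regular a -> regular g -> regular (scomp g a).
Proof.
  intros [na Ha] [ng Hg]. exists (na + ng). intros k Hk.
  assert (EA : forall (T : Type) (f : nat -> T), (forall t, na <= t -> f t = f na) -> f k = f (na + ng) /\ f (S k) = f (S (na + ng))).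
  { intros T f Hf. rewrite (Hf k), (Hf (na+ng)), (Hf (S k)), (Hf (S (na + ng))) by lia. auto. }
  assert (EG : forall (T : Type) (f : nat -> T), (forall t, ng <= t -> f t = f ng) -> f k = f (na + ng) /\ f (S k) = f (S (na + ng))).
  { intros T f Hf. rewrite (Hf k), (Hf (na+ng)), (Hf (S k)), (Hf (S (na + ng))) by lia. auto. }
  destruct (EA _ (inp a)) as [A1 A2]; [intros; apply Ha; auto|].
  destruct (EA _ (out a)) as [A3 A4]; [intros; apply Ha; auto|].
  destruct (EA _ (mem a)) as [A5 A6]; [intros; apply Ha; auto|].
  destruct (EA _ (lay a)) as [A7 A8]; [intros; apply Ha; auto|].
  destruct (EG _ (inp g)) as [G1 G2]; [intros; apply Hg; auto|].
  destruct (EG _ (out g)) as [G3 G4]; [intros; apply Hg; auto|].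
  destruct (EG _ (mem g)) as [G5 G6]; [intros; apply Hg; auto|].
  destruct (EG _ (lay g)) as [G7 G8]; [intros; apply Hg; auto|].
  simpl. rewrite A1, A3, A5, A6, A7, G3, G5, G6, G7. auto.
Qed.

Lemma reg_stens {C : discard_cat} (a g : sms C) : regular a -> regular g -> regular (stens a g).
Proof.
  intros [na Ha] [ng Hg]. exists (na + ng). intros k Hk.
  assert (EA : forall (T : Type) (f : nat -> T), (forall t, na <= t -> f t = f na) -> f k = f (na + ng) /\ f (S k) = f (S (na + ng))).
  { intros T f Hf. rewrite (Hf k), (Hf (na+ng)), (Hf (S k)), (Hf (S (na + ng))) by lia. auto. }
  assert (EG : forall (T : Type) (f : nat -> T), (forall t, ng <= t -> f t = f ng) -> f k = f (na + ng) /\ f (S k) = f (S (na + ng))).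
  { intros T f Hf. rewrite (Hf k), (Hf (na+ng)), (Hf (S k)), (Hf (S (na + ng))) by lia. auto. }
  destruct (EA _ (inp a)) as [A1 A2]; [intros; apply Ha; auto|].
  destruct (EA _ (out a)) as [A3 A4]; [intros; apply Ha; auto|].
  destruct (EA _ (mem a)) as [A5 A6]; [intros; apply Ha; auto|].
  destruct (EA _ (lay a)) as [A7 A8]; [intros; apply Ha; auto|].
  destruct (EG _ (inp g)) as [G1 G2]; [intros; apply Hg; auto|].
  destruct (EG _ (out g)) as [G3 G4]; [intros; apply Hg; auto|].
  destruct (EG _ (mem g)) as [G5 G6]; [intros; apply Hg; auto|].
  destruct (EG _ (lay g)) as [G7 G8]; [intros; apply Hg; auto|].
  simpl. rewrite A1, A3, A5, A6, A7, G1, G3, G5, G6, G7. auto.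
Qed.

Lemma reg_delay {C : discard_cat} (a : sms C) : regular a -> regular (delay a).
Proof.
  intros [na Ha]. exists (S (S na)). intros k Hk.
  destruct k as [|[|k]]; [lia|lia|].
  simpl. destruct (Ha (S k) ltac:(lia)) as (E1 & E2 & E3 & E4).
  destruct (Ha (S na) ltac:(lia)) as (F1 & F2 & F3 & F4).
  rewrite E1, E2, E3, E4, F1, F2, F3, F4. auto.
Qed.

Definition Q {C : discard_cat} (m : nat) (a b : sms C) : Prop :=
  good a /\ good b /\ parallel a b /\ forall k, 1 <= k -> k <= m -> FA k a = FA k b.

Ltac qsplit := refine (conj _ (conj _ (conj _ _))).

Lemma Q_mono {C : discard_cat} m i (a b : sms C) : i <= m -> Q m a b -> Q i a b.
Proof. unfold Q. intros Hi (H1 & H2 & H3 & H4). qsplit; auto. intros k Hk1 Hk2. apply H4; lia. Qed.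

Lemma good_delay {C : discard_cat} (a : sms C) : good a -> good (delay a).
Proof. intros [W R]. split; [apply wf_delay | apply reg_delay]; auto. Qed.
Lemma good_scomp {C : discard_cat} (g a : sms C) : good a -> good g -> inp g = out a -> good (scomp g a).
Proof. intros [W R] [W' R'] H. split; [apply wf_scomp | apply reg_scomp]; auto. Qed.
Lemma good_stens {C : discard_cat} (a g : sms C) : good a -> good g -> good (stens a g).
Proof. intros [W R] [W' R']. split; [apply wf_stens | apply reg_stens]; auto. Qed.

Lemma sound {C : discard_cat} (G : eqns C) (a b : sms C) :
  derives G a b -> forall m, (forall x y, G x y -> Q m x y) -> Q m a b.
Proof.
  induction 1; intros m HG; unfold Q in *.
  - auto.
  -
    subst L R.
    qsplit; [auto|auto|split; reflexivity|].
    intros k Hk1 Hk2. apply (FA_cm a j bk N M c g); auto;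
      match goal with H : good _ |- _ => exact (proj1 H) end.
  - subst L R.
    qsplit; [auto|auto|split; reflexivity|].
    intros k Hk1 Hk2. apply (FA_im a j bk M p g); auto;
      match goal with H : good _ |- _ => exact (proj1 H) end.
  - qsplit; [auto|auto|split; reflexivity|intros; reflexivity].
  - destruct (IHderives m HG) as (Ga & Gb & [Pi Po] & Hf).
    qsplit; [exact Gb | exact Ga | split; congruence | intros; symmetry; auto].
  - destruct (IHderives1 m HG) as (Ga & Gb & [Pi Po] & Hf).
    destruct (IHderives2 m HG) as (Gb' & Gc & [Pi' Po'] & Hf').
    qsplit; [exact Ga | exact Gc | split; congruence | intros; rewrite Hf, Hf'; auto].
  - destruct (IHderives m HG) as (Ga & Gb & [Pi Po] & Hf).
    pose proof Ga as [Wa _]; pose proof Gb as [Wb _]; pose proof H0 as [Wg _].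
    qsplit; [apply good_scomp; auto; congruence | apply good_scomp; auto; congruence
            | split; simpl; congruence |].
    intros k Hk1 Hk2. rewrite (FA_scomp g a), (FA_scomp g b) by (auto; congruence). rewrite Hf; auto.
  - destruct (IHderives m HG) as (Ga & Gb & [Pi Po] & Hf).
    pose proof Ga as [Wa _]; pose proof Gb as [Wb _]; pose proof H0 as [Wg _].
    qsplit; [apply good_scomp; auto; congruence | apply good_scomp; auto; congruence
            | split; simpl; congruence |].
    intros k Hk1 Hk2. rewrite (FA_scomp a g), (FA_scomp b g) by (auto; congruence). rewrite Hf; auto.
  - destruct (IHderives m HG) as (Ga & Gb & [Pi Po] & Hf).
    pose proof Ga as [Wa _]; pose proof Gb as [Wb _]; pose proof H0 as [Wg _].
    qsplit; [apply good_stens; auto | apply good_stens; auto | split; simpl; rewrite ?Pi, ?Po; reflexivity |].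
    intros k Hk1 Hk2. rewrite (FA_stens g a), (FA_stens g b) by auto. rewrite Hf, Pi, Po by auto. reflexivity.
  - destruct (IHderives m HG) as (Ga & Gb & [Pi Po] & Hf).
    pose proof Ga as [Wa _]; pose proof Gb as [Wb _]; pose proof H0 as [Wg _].
    qsplit; [apply good_stens; auto | apply good_stens; auto | split; simpl; rewrite ?Pi, ?Po; reflexivity |].
    intros k Hk1 Hk2. rewrite (FA_stens a g), (FA_stens b g) by auto. rewrite Hf, Pi, Po by auto. reflexivity.
  -
    match goal with Hx : forall n : nat, good _ /\ _ |- _ => rename Hx into Hgd end.
    match goal with Hx : forall (n : nat) (m0 : nat), _ -> _ |- _ => rename Hx into IHc end.
    assert (aux : forall i, i <= m -> forall n, Q i (a n) (b n)).
    { induction i as [|i IHi]; intros Hi n.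
      - destruct (Hgd n) as (Ga & Gb & Pab). unfold Q. qsplit; auto; intros; lia.
      - apply IHc. intros x y [Hxy | [-> ->]].
        + apply (Q_mono m); [lia | apply HG; auto].
        + destruct (Hgd (S n)) as (Ga & Gb & [Pi Po]).
          pose proof (IHi ltac:(lia) (S n)) as (_ & _ & _ & Hf).
          pose proof Ga as [Wa _]; pose proof Gb as [Wb _].
          qsplit; [apply good_delay; auto | apply good_delay; auto
                  | split; unfold delay; simpl; rewrite ?Pi, ?Po; reflexivity |].
          intros k Hk1 Hk2. destruct k as [|k]; [lia|]. destruct k as [|k].
          * apply FA1_delay.
          * rewrite !FA_delay by (auto; lia).
            apply Hf; lia. }
    apply aux; auto.
Qed.

Theorem lemma4 (C : discard_cat) (a b : sms C) :
  good a -> good b -> inp a = inp b -> out a = out b ->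
  sequiv a b ->
  forall k : nat, 1 <= k -> FA k a = FA k b.
Proof.
  intros Ga Gb Hi Ho Hs k Hk.
  destruct (sound _ a b Hs k (fun x y (f : False) => match f with end)) as (_ & _ & _ & H).
  apply H; auto.
Qed.
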